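(* Let $X$ be a complex Banach space and let $T\in\mathcal{B}(X)$ be a power-bounded operator. Suppose that $\omega:\mathbb{Z}_+\to(0,\infty)$ is a decreasing function such that $\|T^n(I-T)\|\leq\omega(n)$ for all $n\in\mathbb{Z}_+$ and $\omega(n)\to0$ as $n\to\infty$, and define $\omega^*:(0,\infty)\to\mathbb{Z}_+$ by $\omega^*(s):=\min\{n\in\mathbb{Z}_+:\omega(n)\leq s\}$. Then $\sigma(T)\cap\mathbb{T}\subset\{1\}$ and, for any $c\in(0,1)$, $$\|R(\mathrm{e}^{\mathrm{i}\theta},T)\|=O\left(\frac{1}{|\theta|}+\omega^*(c|\theta|)\right)\quad\text{as }|\theta|\to0.$$
   Context: $T$ is power-bounded if $\sup_{n\geq0}\|T^n\|<\infty$. $\mathbb{T}$ is the unit circle, $\sigma(T)$ the spectrum, and $R(\lambda,T)=(\lambda-T)^{-1}$ the resolvent for $\lambda$ in the resolvent set. *)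

(* Defs.v *)
From HB Require Import structures.
From mathcomp Require Import all_boot all_order all_algebra.
From mathcomp Require Import all_classical all_reals all_analysis.
From mathcomp Require Import complex.
Set Implicit Arguments. Unset Strict Implicit. Unset Printing Implicit Defensive.
Import Order.TTheory GRing.Theory Num.Theory.
Import numFieldNormedType.Exports.
Local Open Scope ring_scope.
Local Open Scope complex_scope.

(* A complex Banach space is a [completeNormedModType R[i]] (norms are
   complex numbers with zero imaginary part, compared in R[i]). *)

Definition opbound (R : realType) (X : normedModType R[i]) (A : X -> X) (M : R) :=
  forall x : X, `|A x| <= M%:C * `|x|.

Definition bounded_op (R : realType) (X : normedModType R[i]) (A : X -> X) :=
  linear A /\ exists M : R, opbound A M.

Definition shift_op (R : realType) (X : normedModType R[i]) (T : X -> X) (l : R[i]) : X -> X :=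
  fun x => l *: x - T x.

Definition is_resolvent (R : realType) (X : normedModType R[i]) (T : X -> X) (l : R[i]) (S : X -> X) :=
  bounded_op S /\ cancel (shift_op T l) S /\ cancel S (shift_op T l).

(* l belongs to the resolvent set of T (i.e. l is not in sigma(T)). *)
Definition in_resolvent_set (R : realType) (X : normedModType R[i]) (T : X -> X) (l : R[i]) :=
  exists S : X -> X, is_resolvent T l S.

Definition expi (R : realType) (t : R) : R[i] := (cos t +i* sin t)%C.

(* omega^*(s) = min { n : omega n <= s } (0 if the set is empty, which cannot
   happen under the hypotheses for s > 0). *)
Definition omega_star (R : realType) (w : nat -> R) (s : R) : nat :=
  match pselect (exists n, w n <= s) with
  | left h => ex_minn h
  | right _ => 0%N
  end.

(* Main.v *)
Require Import Defs.
From HB Require Import structures.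
From mathcomp Require Import all_boot all_order all_algebra.
From mathcomp Require Import all_classical all_reals all_analysis.
From mathcomp Require Import complex.
From mathcomp Require Import ring lra.
Import Order.TTheory GRing.Theory Num.Theory.
Import numFieldNormedType.Exports.
Local Open Scope ring_scope.
Local Open Scope complex_scope.
Local Open Scope classical_set_scope.


Section Lin.
Context {R : realType} {X : normedModType R[i]}.
Implicit Types (A T : X -> X).

Lemma linD A : linear A -> forall u v, A (u + v) = A u + A v.
Proof. by move=> hA u v; rewrite -[u in LHS]scale1r hA scale1r. Qed.
Lemma lin0 A : linear A -> A 0 = 0.
Proof. by move=> hA; have h := @linD A hA 0 0; rewrite addr0 in h; apply: (addrI (A 0)); rewrite -h addr0. Qed.
Lemma linZ A : linear A -> forall a u, A (a *: u) = a *: A u.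
Proof. by move=> hA a u; rewrite -[_ *: u]addr0 hA lin0// addr0. Qed.
Lemma linN A : linear A -> forall u, A (- u) = - A u.
Proof. by move=> hA u; rewrite -scaleN1r linZ// scaleN1r. Qed.
Lemma linB A : linear A -> forall u v, A (u - v) = A u - A v.
Proof. by move=> hA u v; rewrite linD// linN. Qed.
Lemma linsum A : linear A -> forall n (F : nat -> X), A (\sum_(k < n) F k) = \sum_(k < n) A (F k).
Proof.
move=> hA; elim=> [|n IH] F; first by rewrite !big_ord0 lin0.
by rewrite !big_ord_recr /= linD// IH.
Qed.
Lemma lin_iter A : linear A -> forall n, linear (iter n A).
Proof.
move=> hA; elim=> [|n IH] a u v //=.
by rewrite IH hA.
Qed.
Lemma iterC A n x : iter n A (A x) = A (iter n A x).
Proof. by rewrite -iterSr. Qed.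

Definition opb A (m : R[i]) := forall x, `|A x| <= m * `|x|.
End Lin.


Lemma geo_small (R : realType) (q eps : R) : 0 <= q < 1 -> 0 < eps -> exists N, q ^+ N < eps.
Proof.
move=> /andP[q0 q1] e0.
have : `|q| < 1 by rewrite ger0_norm.
move=> /(cvg_geometric 1) /cvgrPdist_lt /(_ _ e0) [N _ H].
by exists N; have := H N (leqnn N); rewrite /geometric /= mul1r sub0r normrN ger0_norm ?exprn_ge0.
Qed.

Lemma geo_sum (F : numFieldType) (q : F) m j : (1 - q) * \sum_(m <= k < m + j) q ^+ k = q ^+ m - q ^+ (m + j).
Proof.
elim: j => [|j IH]; first by rewrite addn0 big_geq // mulr0 subrr.
by rewrite addnS big_nat_recr ?leq_addr //= mulrDr IH exprS; ring.
Qed.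

Section Neumann.
Context {R : realType} {X : completeNormedModType R[i]}.

Lemma norm_real (z : R[i]) : 0 <= z -> z = (complex.Re z)%:C.
Proof. by move=> /ger0_Im h; rewrite [LHS]complexE h mulr0 addr0. Qed.

Lemma neumann (E : X -> X) (q : R) : linear E -> 0 <= q < 1 -> opb E q%:C ->
  forall x, exists y, y + E y = x.
Proof.
move=> hE /andP[q0 q1] hq x.
pose F z := - E z.
have hF : linear F by move=> a u v; rewrite /F hE opprD scalerN.
pose u k := iter k F x.
have hu k : `|u k| <= (q ^+ k)%:C * `|x|.
  elim: k => [|k IH]; first by rewrite expr0 mul1r.
  rewrite /u iterS -/(u k) /F normrN (le_trans (hq _)) // exprS rmorphM /= -mulrA.
  by rewrite ler_wpM2l // ler0c.
pose s := series u.
have sS n : s n.+1 = x + F (s n).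
  rewrite /s /series /= big_nat_recl // big_mkord.
  have -> : \sum_(0 <= k < n) u k = \sum_(k < n) u k by rewrite big_mkord.
  by rewrite linsum.
have cs : cvgn s.
  apply/cauchy_cvgP/cauchy_seriesP => e e0.
  have ex0 : 0 <= `|x| by [].
  set a := complex.Re `|x|. set eR := complex.Re e.
  have ea : `|x| = a%:C by apply: norm_real.
  have ee : e = eR%:C by apply: norm_real; apply: ltW.
  have eR0 : 0 < eR by rewrite -ltcR -ee.
  have a0 : 0 <= a by rewrite -ler0c -ea.
  have [N HN] : exists N, q ^+ N < eR * (1 - q) / (a + 1).
    apply: geo_small; first by rewrite q0.
    by rewrite divr_gt0 ?mulr_gt0 ?subr_gt0 // ltr_wpDl.
  exists ([set k | (N <= k)%N], [set k | True]) => /=.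
    by split => //; exists N.
  case=> m n /= [Nm _].
  case: (leqP m n) => mn; last first.
    by rewrite big_geq ?normr0 // ltnW.
  rewrite (le_lt_trans (ler_norm_sum _ _ _)) //.
  rewrite (le_lt_trans (ler_sum _ (fun k _ => hu k))) //.
  rewrite -mulr_suml -(subnKC mn).
  rewrite -(big_morph _ (@rmorphD _ _ (real_complex R)) (rmorph0 _)) ea -rmorphM ee ltcR.
  have q1' : 0 < 1 - q by rewrite subr_gt0.
  rewrite -(ltr_pM2l q1') mulrA geo_sum.
  have : q ^+ (m + (n - m)) >= 0 by rewrite exprn_ge0.
  have : q ^+ m <= q ^+ N by rewrite ler_wiXn2l // ltW.
  move: HN; rewrite ltr_pdivlMr ?ltr_wpDl // => HN.
  nra.
have sy : s @ \oo --> limn s := cs.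
set y := limn s in sy *.
exists y.
apply/eqP; rewrite -subr_eq0 -normr_eq0; apply/negPn/negP => hne.
have hp : 0 < `|y + E y - x| by rewrite normr_gt0 -normr_eq0.
pose e := `|y + E y - x| / (2 + q%:C).
have e0 : 0 < e by rewrite divr_gt0 // ltr_wpDr // ler0c.
move/cvgrPdist_lt: sy => /(_ e e0) [N _ HN].
have h1 := HN N.+1 (leqnSn N).
have h2 := HN N (leqnn N).
have : `|y + E y - x| <= `|y - s N.+1| + q%:C * `|y - s N|.
  have -> : y + E y - x = (y - s N.+1) + E (y - s N).
    by rewrite sS (linB _ hE) /F opprD opprK addrACA addrK.
  by rewrite (le_trans (ler_normD _ _)) // lerD // hq.
have : `|y - s N.+1| + q%:C * `|y - s N| < e + q%:C * e.
  by rewrite ltr_leD // ler_wpM2l ?ler0c // ltW.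
move=> A B; have := le_lt_trans B A.
have q0' : 0 <= q%:C :> R[i] by rewrite ler0c.
have -> : e + q%:C * e = (1 + q%:C) * e by ring.
rewrite /e mulrA ltr_pdivlMr ?(ltr_wpDr q0') // mulrC ltr_pM2r // ltrD2r.
by rewrite -[1 : R[i]]/(1%:R) ltr_nat.
Qed.
End Neumann.


Section Core.
Context {R : realType} {X : completeNormedModType R[i]}.

Lemma linear_scale (A : X -> X) (c : R[i]) : linear A -> linear (fun x => c *: A x).
Proof. by move=> hA b u v; rewrite hA scalerDr !scalerA mulrC. Qed.
Lemma linear_add (A B : X -> X) : linear A -> linear B -> linear (fun x => A x + B x).
Proof. by move=> hA hB b u v; rewrite hA hB scalerDr addrACA. Qed.
Lemma linear_sum n (F : nat -> X -> X) : (forall k, linear (F k)) ->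
  linear (fun x => \sum_(k < n) F k x).
Proof.
move=> hF; elim: n => [|n IH] b u v.
  by rewrite !big_ord0 scaler0 addr0.
by rewrite !big_ord_recr /= IH hF scalerDr addrACA.
Qed.

Lemma opb_le (A : X -> X) (m m' : R[i]) : m <= m' -> opb A m -> opb A m'.
Proof. by move=> mm h x; rewrite (le_trans (h x)) // ler_wpM2r. Qed.

Variables (T : X -> X) (hT : linear T) (M : R) (M0 : 0 <= M)
  (hM : forall k, opb (iter k T) M%:C) (l : R[i]) (l1 : `|l| = 1) (ln1 : l != 1).

Let a := l^-1.
Let l0 : l != 0. Proof. by rewrite -normr_eq0 l1 oner_eq0. Qed.
Let la : l * a = 1. Proof. by rewrite /a mulfV. Qed.
Let a1 : `|a| = 1. Proof. by rewrite /a normfV l1 invr1. Qed.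
Let Bf n x := \sum_(k < n) a ^+ k.+1 *: iter k T x.

Lemma tele n x : l *: Bf n x - T (Bf n x) = x - a ^+ n *: iter n T x.
Proof.
elim: n => [|n IH].
  by rewrite /Bf big_ord0 scaler0 lin0 // subrr expr0 scale1r subrr.
rewrite /Bf big_ord_recr /= -/(Bf n x) scalerDr (linD _ hT) (linZ _ hT).
rewrite opprD addrACA IH scalerA exprS mulrA la mul1r.
by rewrite addrA subrK.
Qed.

Lemma Bf_lin n : linear (Bf n).
Proof. apply: (@linear_sum n (fun k x => a ^+ k.+1 *: iter k T x)) => k. by apply: linear_scale; apply: lin_iter. Qed.

Lemma Bf_comm n x : Bf n (T x) = T (Bf n x).
Proof.
rewrite /Bf (linsum _ hT n (fun k => a ^+ k.+1 *: iter k T x)); apply: eq_bigr => k _.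
by rewrite (linZ _ hT) iterC.
Qed.

Lemma Bf_bound n : opb (Bf n) (n%:R * M%:C).
Proof.
move=> x; rewrite /Bf; apply: (le_trans (ler_norm_sum _ _ _)).
apply: le_trans.
  apply: (ler_sum _ (G := fun _ => M%:C * `|x|)) => k _.
  by rewrite normrZ normrX a1 expr1n mul1r hM.
by rewrite sumr_const card_ord -mulrA mulr_natl.
Qed.

Lemma lin_shift k : linear (shift_op T k).
Proof.
move=> b u v; rewrite /shift_op hT scalerDr !scalerA mulrC -scalerA scalerBr.
by rewrite opprD addrACA.
Qed.

Variables (n : nat) (q w d : R) (q0 : 0 <= q) (q1 : q < 1)
  (hw : opb (fun x => iter n T (x - T x)) w%:C) (hd : `|l - 1| = d%:C) (d0 : 0 < d)
  (wq : w <= q * d).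

Let c := a ^+ n / (l - 1).
Let Pf x := c *: iter n T x.
Let Ef x := c *: iter n T (x - T x).
Let Cf x := Bf n x + Pf x.
Let l1n0 : l - 1 != 0. Proof. by rewrite subr_eq0. Qed.
Let hcl : l * c = a ^+ n + c.
Proof. rewrite /c; apply: (mulIf l1n0); rewrite mulrDl -!mulrA mulVf //; ring. Qed.
Let normc : `|c| = d%:C^-1.
Proof. by rewrite /c normrM normrX a1 expr1n mul1r normfV hd. Qed.

Lemma key x : l *: Cf x - T (Cf x) = x + Ef x.
Proof.
rewrite /Cf scalerDr (linD _ hT) opprD addrACA tele.
rewrite /Pf /Ef (linZ _ hT) (linB _ (lin_iter _ hT n)) iterC.
rewrite scalerA hcl scalerDl scalerBr.
by rewrite -addrA; congr (x + _); rewrite addrA addKr.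
Qed.

Lemma Cf_lin : linear Cf.
Proof. apply: linear_add; first exact: Bf_lin. by apply: linear_scale; apply: lin_iter. Qed.

Lemma Cf_comm x : Cf (T x) = T (Cf x).
Proof. by rewrite /Cf Bf_comm /Pf (linD _ hT) (linZ _ hT) iterC. Qed.

Lemma Cf_bound : opb Cf ((n%:R * M + M / d)%:C).
Proof.
move=> x; rewrite /Cf (le_trans (ler_normD _ _)) // rmorphD mulrDl lerD //.
  by rewrite rmorphM /= rmorph_nat Bf_bound.
rewrite /Pf normrZ normc rmorphM /= fmorphV /= [M%:C * _]mulrC -mulrA ler_wpM2l ?hM //.
by rewrite invr_ge0 ler0c ltW.
Qed.

Lemma Ef_bound : opb Ef q%:C.
Proof.
move=> x; rewrite /Ef normrZ normc (le_trans (ler_wpM2l _ (hw x))) //.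
  by rewrite invr_ge0 ler0c ltW.
rewrite mulrA ler_wpM2r // -fmorphV -rmorphM lecR ler_pdivrMl //.
by rewrite mulrC.
Qed.

Lemma Ef_lin : linear Ef.
Proof.
move=> b u v; rewrite /Ef.
have h := lin_shift 1 b u v; rewrite /shift_op !scale1r in h.
by rewrite h (lin_iter _ hT) scalerDr !scalerA mulrC.
Qed.

Lemma resolvent_core : exists S : X -> X, is_resolvent T l S /\ opbound S ((n%:R * M + M / d) / (1 - q)).
Proof.
have qq : 0 <= q < 1 by rewrite q0.
pose G x := cid (@neumann R X Ef q Ef_lin qq Ef_bound x).
pose g x := proj1_sig (G x).
have gP x : g x + Ef (g x) = x := proj2_sig (G x).
pose S x := Cf (g x).
have hsh := lin_shift l.
have CS u : Cf (shift_op T l u) = u + Ef u.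
  by rewrite /shift_op (linB _ Cf_lin) (linZ _ Cf_lin) Cf_comm key.
have right x : shift_op T l (S x) = x by rewrite /shift_op /S key gP.
have gb x : `|g x| <= `|x| / (1 - q)%:C.
  have q1' : 0 < (1 - q)%:C by rewrite ltcR subr_gt0.
  rewrite ler_pdivlMr // rmorphB /= mulrBr mulr1 lerBlDr.
  have e : g x = x - Ef (g x) by rewrite -{2}(gP x) addrK.
  rewrite {1}e (le_trans (ler_normB _ _)) // lerD2l mulrC; exact: Ef_bound.
have Sb : opbound S ((n%:R * M + M / d) / (1 - q)).
  move=> x; rewrite /S (le_trans (Cf_bound _)) // rmorphM /= fmorphV /= -mulrA ler_wpM2l //.
    rewrite ler0c; apply: addr_ge0; [apply: mulr_ge0 | apply: divr_ge0] => //; exact: ltW.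
  by rewrite mulrC gb.
clearbody S.
have inj u : shift_op T l u = 0 -> u = 0.
  move=> h; have := CS u; rewrite h lin0; last exact: Cf_lin.
  move/eqP; rewrite eq_sym addr_eq0 => /eqP hu.
  apply/eqP; rewrite -normr_eq0 eq_le normr_ge0 andbT.
  have : `|u| <= q%:C * `|u| by rewrite {1}hu normrN Ef_bound.
  rewrite -{1}[`|u|]mul1r -subr_ge0 -mulrBl => h0.
  have qn : q%:C - 1 < 0 by rewrite subr_lt0 ltcR.
  have h1 : (q%:C - 1) * `|u| <= 0 by rewrite mulr_le0_ge0 // ltW.
  have : (q%:C - 1) * `|u| == 0 by rewrite eq_le h0 h1.
  by rewrite mulf_eq0 (lt_eqF qn) /= => /eqP ->.
have left x : S (shift_op T l x) = x.
  apply/eqP; rewrite -subr_eq0; apply/eqP; apply: inj.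
  by rewrite (linB _ hsh) right subrr.
have linS : linear S.
  move=> b u v; apply/eqP; rewrite -subr_eq0; apply/eqP; apply: inj.
  by rewrite (linB _ hsh) (linD _ hsh) (linZ _ hsh) !right subrr.
by exists S; split => //; split => //; split => //; exists ((n%:R * M + M / d) / (1 - q)).
Qed.

End Core.


Section Trig.
Context {R : realType}.

Lemma mono0 (f df : R -> R) (x : R) : 0 <= x -> (forall y : R, is_derive y 1 f (df y)) ->
  (forall y : R, 0 <= y -> 0 <= df y) -> f 0 <= f x.
Proof.
move=> x0 hd hp.
rewrite -subr_ge0.
have [|c cI ->] := @MVT_segment R f df 0 x x0 (fun y _ => hd y) _.
  apply: derivable_within_continuous => y _.
  exact: ex_derive.
rewrite subr0 mulr_ge0 // hp //.
by move: cI; rewrite in_itv /= => /andP[].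
Qed.

Lemma d1 (y : R) : is_derive y 1 (fun z : R => z - sin z) (1 - cos y).
Proof.
apply: is_deriveB.
Qed.

Lemma d2 (y : R) : is_derive y 1 (fun z : R => cos z - 1 + z ^+ 2 / 2) (- sin y + y).
Proof.
apply: is_derive_eq.
rewrite !scaler0 subr0 add0r; congr (_ + _).
by rewrite /GRing.scale /=; field.
Qed.

Lemma d3 (y : R) : is_derive y 1 (fun z : R => sin z - z + z ^+ 3 / 6) (cos y - 1 + y ^+ 2 / 2).
Proof.
apply: is_derive_eq.
by rewrite /GRing.scale /=; field.
Qed.

Lemma sin_le_id (x : R) : 0 <= x -> sin x <= x.
Proof.
move=> x0.
have : (fun z : R => z - sin z) 0 <= (fun z => z - sin z) x.
  apply: (mono0 _ _ x x0 d1) => y _; by rewrite subr_ge0 cos_le1.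
rewrite /= sin0; lra.
Qed.

Lemma cos_ge (x : R) : 0 <= x -> 1 - x ^+ 2 / 2 <= cos x.
Proof.
move=> x0.
have : (fun z : R => cos z - 1 + z ^+ 2 / 2) 0 <= (fun z => cos z - 1 + z ^+ 2 / 2) x.
  apply: (mono0 _ _ x x0 d2) => y y0; have := sin_le_id _ y0; lra.
rewrite /= cos0 expr0n /=; lra.
Qed.

Lemma sin_ge (x : R) : 0 <= x -> x - x ^+ 3 / 6 <= sin x.
Proof.
move=> x0.
have : (fun z : R => sin z - z + z ^+ 3 / 6) 0 <= (fun z => sin z - z + z ^+ 3 / 6) x.
  apply: (mono0 _ _ x x0 d3) => y y0; have := cos_ge _ y0; lra.
rewrite /= sin0 expr0n /=; lra.
Qed.
End Trig.


Section E.
Context {R : realType}.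

Lemma expi_norm1 (t : R) : `|expi t| = 1.
Proof. by rewrite normc_def /expi /= cos2Dsin2 sqrtr1. Qed.

Lemma expi_sub1 (t : R) : `|expi t - 1| = (Num.sqrt ((cos t - 1) ^+ 2 + sin t ^+ 2))%:C.
Proof. by rewrite normc_def /expi /=; rewrite subr0. Qed.

Lemma sqrt_ge (t : R) : `|t| - `|t| ^+ 3 / 6 <= Num.sqrt ((cos t - 1) ^+ 2 + sin t ^+ 2).
Proof.
apply: (le_trans (y := `|sin t|)).
  have -> : `|sin t| = `|sin (`|t|)|.
    by case: (ler0P t) => ht; rewrite ?sinN ?normrN.
  exact: (le_trans (sin_ge _ (normr_ge0 t)) (ler_norm _)).
rewrite -sqrtr_sqr ler_sqrt ?lerDr ?sqr_ge0 //.
by rewrite addr_ge0 ?sqr_ge0.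
Qed.
End E.


Lemma omega_star_spec (R : realType) (w : nat -> R) s : (exists n, w n <= s) -> w (omega_star w s) <= s.
Proof.
rewrite /omega_star; case: pselect => // h _.
by case: ex_minnP.
Qed.

Theorem theorem2p4 (R : realType) (X : completeNormedModType R[i]) (T : X -> X)
  (w : nat -> R) :
  bounded_op T ->
  (exists M : R, forall n : nat, opbound (iter n T) M) ->
  (forall n : nat, 0 < w n) ->
  (forall m n : nat, (m <= n)%N -> w n <= w m) ->
  (forall n : nat, opbound (fun x => iter n T (x - T x)) (w n)) ->
  (w @ \oo --> (0 : R))%classic ->
  (forall l : R[i], `|l| = 1 -> l != 1 -> in_resolvent_set T l) /\
  (forall c : R, 0 < c < 1 ->
     exists K : R, exists d : R, 0 < K /\ 0 < d /\
       forall t : R, 0 < `|t| < d ->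
         exists S : X -> X, is_resolvent T (expi t) S /\
           opbound S (K * (`|t|^-1 + (omega_star w (c * `|t|))%:R))).
Proof.
move=> [hT _] [M hM] wpos wdec hw wcvg.
pose M1 := `|M| + 1.
have M10 : 0 < M1 by rewrite ltr_wpDl.
have hM1 k : opb (iter k T) M1%:C.
  apply: opb_le (hM k); rewrite lecR /M1; apply: (le_trans (ler_norm M)); by rewrite lerDl.
have wsmall eps : 0 < eps -> exists N, w N <= eps.
  move=> e0; move/cvgrPdist_lt: wcvg => /(_ eps e0) [N _ HN].
  exists N; have := HN N (leqnn N); rewrite sub0r normrN => h.
  exact: (le_trans (ler_norm _) (ltW h)).
split.
  move=> l l1 ln1.
  set d := complex.Re `|l - 1|.
  have hd : `|l - 1| = d%:C by apply: norm_real.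
  have d0 : 0 < d by rewrite -ltcR -hd normr_gt0 subr_eq0.
  have [N hN] := wsmall (d / 2) (divr_gt0 d0 (@ltr0Sn R 1)).
  have q1 : (1/2 : R) < 1 by lra.
  have q0 : (0 : R) <= 1/2 by lra.
  have wq : w N <= 1/2 * d by lra.
  have [S [hS _]] := @resolvent_core R X T hT M1 (ltW M10) hM1 l l1 ln1 N (1/2) (w N) d
    q0 q1 (hw N) hd d0 wq.
  by exists S.
move=> c /andP[c0 c1].
pose q := (1 + c) / 2.
pose e := (1 - c)^-1.
have e0 : 0 < e by rewrite invr_gt0 subr_gt0.
pose K := 4 * M1 * e.
pose dd := (1 - c) / 2.
exists K, dd; split; first by rewrite /K !mulr_gt0.
split; first by rewrite /dd divr_gt0 // subr_gt0.
move=> t /andP[t0 td].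
set n := omega_star w (c * `|t|).
have hn : w n <= c * `|t| by apply: omega_star_spec; apply: wsmall; rewrite mulr_gt0.
set l := expi t.
set d := Num.sqrt ((cos t - 1) ^+ 2 + sin t ^+ 2).
have hd : `|l - 1| = d%:C := expi_sub1 t.
have dge : `|t| - `|t| ^+ 3 / 6 <= d := sqrt_ge t.
set a := `|t| in t0 td hn dge *.
have hb : a ^+ 2 <= (1 - c) / 4.
  move: td; rewrite /dd => td; nra.
have a3 : a ^+ 3 = a * a ^+ 2 by rewrite exprS.
have dlow : a / 2 <= d.
  apply: le_trans dge; rewrite a3.
  have : a * a ^+ 2 <= a * 3 by rewrite ler_wpM2l ?ltW //; lra.
  lra.
have d0 : 0 < d by apply: lt_le_trans dlow; rewrite divr_gt0.
have ln1 : l != 1.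
  apply/eqP => h; move: hd; rewrite h subrr normr0 => /eqP; rewrite eq_sym.
  by rewrite -(rmorph0 (real_complex R)) (inj_eq (@complexI _)) gt_eqF.
have wq : w n <= q * d.
  apply: (le_trans hn); apply: (le_trans (y := q * (a - a ^+ 3 / 6))); last first.
    by rewrite ler_wpM2l // /q divr_ge0 // addr_ge0 // ltW.
  rewrite a3 /q.
  have hb' : (1 + c) * a ^+ 2 / 12 <= (1 - c) / 2.
    have : (1 + c) * a ^+ 2 <= 2 * a ^+ 2 by rewrite ler_wpM2r ?sqr_ge0 //; lra.
    lra.
  have hb'' : 0 <= (1 - c) / 2 - (1 + c) * a ^+ 2 / 12 by rewrite subr_ge0.
  have := mulr_ge0 (ltW t0) hb''.
  lra.
have q0 : 0 <= q by rewrite /q divr_ge0 // addr_ge0 // ltW.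
have q1 : q < 1 by rewrite /q; lra.
have [S [hS hSb]] := @resolvent_core R X T hT M1 (ltW M10) hM1 l (expi_norm1 t) ln1 n q (w n) d
    q0 q1 (hw n) hd d0 wq.
exists S; split => //.
apply: opb_le hSb; rewrite lecR.
pose A := a^-1.
have aA : a * A = 1 by rewrite /A mulfV // gt_eqF.
have h1 : M1 / d <= M1 * (2 * A).
  rewrite ler_pdivrMr //.
  have : 0 <= (2 * d - a) * A.
    by apply: mulr_ge0; [lra | rewrite /A invr_ge0 ltW].
  have M10' := M10; nra.
have -> : (n%:R * M1 + M1 / d) / (1 - q) = (n%:R * M1 + M1 / d) * (2 * e).
  by rewrite /q /e; field; rewrite subr_eq0 !gt_eqF.
apply: (le_trans (y := (n%:R * M1 + M1 * (2 * A)) * (2 * e))).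
  by apply: ler_wpM2r; [rewrite mulr_ge0 // ltW | rewrite lerD2l].
have : 0 <= n%:R * M1 * e by apply: mulr_ge0; [apply: mulr_ge0 => //; exact: ltW | exact: ltW].
rewrite /K -/A.
lra.
Qed.
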